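(* Let $g(t)=\sum_{n\ge0}g_nt^n$ be a real formal power series with $g_0=1$ and $f(t)=\sum_{n\ge1}f_nt^n$ a real formal power series with $f_1\neq0$. Put $z_0=f_1$, $w_0=g_1$ and let \[ Z(t)=\frac{f(t)-z_0t\,g(t)}{f(t)}+z_0=\sum_{k\ge0}z_kt^k,\qquad W(t)=\frac{(1-w_0t)g(t)-1}{f(t)}+w_0=\sum_{k\ge0}w_kt^k . \] Let $J$ be the infinite matrix with $0$th column $(w_0,w_1,w_2,\dots)^T$, $1$st column $(z_0,z_1,z_2,\dots)^T$, entries $J_{i,i+1}=1$ for $i\ge1$, and all other entries $0$. If $J$ is totally positive, then the quasi-Riordan array $[g,f]$ is totally positive.
   Context: The quasi-Riordan array $[g,f]$ is the infinite lower triangular matrix $(r_{n,k})_{n,k\ge0}$ with $r_{n,0}=g_n$ and $r_{n,k}=f_{n-k+1}$ for $k\ge1$ (with $f_j=0$ for $j\le0$); its columns have generating functions $g,f,tf,t^2f,\dots$. The matrix $J$ is called the production matrix of $[g,f]$ (the data $A(t)=1$, $Z$, $W$ being the $A$-, $Z$-, $W$-sequences of $[g,f]$). An infinite matrix is totally positive (TP) if all its minors are nonnegative. *)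

(* Defs.v *)
From HB Require Import structures.
From mathcomp Require Import all_boot all_order all_algebra.
Set Implicit Arguments. Unset Strict Implicit. Unset Printing Implicit Defensive.
Import Order.TTheory GRing.Theory Num.Theory.
Local Open Scope ring_scope.

Section Defs.
Variable R : fieldType.

(* first n+1 coefficients of the multiplicative inverse of a series a with a 0 != 0,
   via the standard recursion  b_0 = 1/a_0,
   b_{n+1} = -(1/a_0) * sum_{i=0}^{n} a_{i+1} b_{n-i}. *)
Fixpoint ps_inv_seq (a : nat -> R) (n : nat) : seq R :=
  match n with
  | 0 => [:: (a 0%N)^-1]
  | m.+1 => let s := ps_inv_seq a m in
            rcons s (- (a 0%N)^-1 * \sum_(i < m.+1) a i.+1 * nth 0 s (m - i))
  end.

Definition ps_inv (a : nat -> R) (n : nat) : R := nth 0 (ps_inv_seq a n) n.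

Definition ps_mul (a b : nat -> R) (n : nat) : R :=
  \sum_(i < n.+1) a i * b (n - i)%N.

(* division by t of a series with zero constant term *)
Definition ps_divt (a : nat -> R) (n : nat) : R := a n.+1.

Definition ps_mult (a : nat -> R) (n : nat) : R :=
  if n is m.+1 then a m else 0.

(* quotient a / b of series with a_0 = b_0 = 0 and b_1 != 0:
   (a/t) * (b/t)^{-1} *)
Definition ps_div (a b : nat -> R) : nat -> R :=
  ps_mul (ps_divt a) (ps_inv (ps_divt b)).

(* Z-sequence: Z(t) = (f(t) - z0 t g(t)) / f(t) + z0, z0 = f_1 *)
Definition Zseq (g f : nat -> R) (n : nat) : R :=
  ps_div (fun k => f k - f 1%N * ps_mult g k) f n + (n == 0%N)%:R * f 1%N.

(* W-sequence: W(t) = ((1 - w0 t) g(t) - 1) / f(t) + w0, w0 = g_1 *)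
Definition Wseq (g f : nat -> R) (n : nat) : R :=
  ps_div (fun k => g k - g 1%N * ps_mult g k - (k == 0%N)%:R) f n
  + (n == 0%N)%:R * g 1%N.

Definition Jmat (g f : nat -> R) (i j : nat) : R :=
  if j == 0%N then Wseq g f i
  else if j == 1%N then Zseq g f i
  else if j == i.+1 then 1 else 0.

Definition quasi_riordan (g f : nat -> R) (n k : nat) : R :=
  if k == 0%N then g n
  else if (k <= n)%N then f (n - k).+1 else 0.
End Defs.

Definition totally_positive (R : numDomainType) (M : nat -> nat -> R) : Prop :=
  forall (k : nat) (r c : 'I_k -> nat),
    (forall i j : 'I_k, (i < j)%N -> (r i < r j)%N) ->
    (forall i j : 'I_k, (i < j)%N -> (c i < c j)%N) ->
    0 <= \det (\matrix_(i < k, j < k) M (r i) (c j)).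

(* Main.v *)
Require Import Defs.
From HB Require Import structures.
From mathcomp Require Import all_boot all_order all_algebra all_fingroup ring.
Set Implicit Arguments. Unset Strict Implicit. Unset Printing Implicit Defensive.
Import Order.TTheory GRing.Theory Num.Theory.
Local Open Scope ring_scope.

Section Series.
Variable R : fieldType.
Implicit Types a b c : nat -> R.

Lemma ps_mul_ext n a a' b b' : (forall i, (i <= n)%N -> a i = a' i) ->
  (forall i, (i <= n)%N -> b i = b' i) -> ps_mul a b n = ps_mul a' b' n.
Proof.
move=> ha hb; apply: eq_bigr => i _.
by rewrite ha ?hb ?leq_subr // -ltnS.
Qed.

Definition trp N a : {poly R} := \poly_(i < N) a i.

Lemma ps_mul_tr N a b n : (n < N)%N -> ps_mul a b n = (trp N a * trp N b)`_n.
Proof.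
move=> nN; rewrite coefM; apply: ps_mul_ext => i ilen; rewrite coef_poly.
  by rewrite (leq_ltn_trans ilen nN).
by rewrite (leq_ltn_trans ilen nN).
Qed.

Lemma ps_mulC a b n : ps_mul a b n = ps_mul b a n.
Proof. by rewrite !(@ps_mul_tr n.+1) // mulrC. Qed.

Lemma ps_mul_delta a n : ps_mul a (fun j => (j == 0%N)%:R) n = a n.
Proof.
rewrite /ps_mul big_ord_recr /= subnn eqxx mulr1 big1 ?add0r // => i _.
by rewrite subn_eq0 leqNgt ltn_ord mulr0.
Qed.

Lemma ps_mul_inv_assoc a b c n :
  (forall j, (j <= n)%N -> ps_mul b c j = (j == 0%N)%:R) ->
  ps_mul b (ps_mul a c) n = a n.
Proof.
move=> hbc.
have e1 : ps_mul b (ps_mul a c) n =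
   ps_mul b (fun j => (trp n.+1 a * trp n.+1 c)`_j) n.
  by apply: ps_mul_ext => // j jn; apply: ps_mul_tr.
rewrite e1; transitivity ((trp n.+1 b * (trp n.+1 a * trp n.+1 c))`_n).
  rewrite coefM; apply: ps_mul_ext => // i ilen.
  by rewrite coef_poly ltnS ilen.
rewrite mulrCA -(ps_mul_delta a n) coefM.
apply: ps_mul_ext => i ilen; first by rewrite coef_poly ltnS ilen.
by rewrite -hbc // (@ps_mul_tr n.+1) // ltnS.
Qed.


Lemma size_ps_inv_seq a n : size (ps_inv_seq a n) = n.+1.
Proof. by elim: n => [|n IH] //=; rewrite size_rcons IH. Qed.

Lemma nth_ps_inv_seq a n i : (i <= n)%N -> nth 0 (ps_inv_seq a n) i = ps_inv a i.
Proof.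
elim: n => [|n IH] ilen.
  by move: ilen; rewrite leqn0 => /eqP ->.
rewrite leq_eqVlt in ilen; case/orP: ilen => [/eqP ->|ilt] //.
rewrite /= nth_rcons size_ps_inv_seq ilt; exact: IH.
Qed.

Lemma ps_invS a m : ps_inv a m.+1 =
  - (a 0%N)^-1 * \sum_(i < m.+1) a i.+1 * ps_inv a (m - i).
Proof.
rewrite /ps_inv /= nth_rcons size_ps_inv_seq ltnn eqxx; congr (_ * _).
by apply: eq_bigr => i _; rewrite nth_ps_inv_seq // leq_subr.
Qed.

Lemma ps_mul_inv b n : b 0%N != 0 -> ps_mul b (ps_inv b) n = (n == 0%N)%:R.
Proof.
move=> b0; case: n => [|m].
  by rewrite /ps_mul big_ord1 /ps_inv /= mulfV.
rewrite /ps_mul big_ord_recl subn0 ps_invS mulrA mulrN mulfV // mulN1r.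
rewrite /=; apply/eqP; rewrite addrC subr_eq0; apply/eqP.
by apply: eq_bigr => i _; rewrite /bump /= add1n subSS.
Qed.

Lemma keyK a f n : f 1%N != 0 ->
  \sum_(j < n.+1) f (n.+1 - j)%N * ps_div a f j = a n.+1.
Proof.
move=> f1.
have -> : \sum_(j < n.+1) f (n.+1 - j)%N * ps_div a f j
   = ps_mul (ps_divt f) (ps_div a f) n.
  rewrite ps_mulC; apply: eq_bigr => j _.
  by rewrite mulrC /ps_divt subSn // -ltnS.
rewrite /ps_div ps_mul_inv_assoc // => j _; exact: ps_mul_inv.
Qed.

End Series.

Section Entry.
Variable R : fieldType.
Variables g f : nat -> R.
Hypothesis g0 : g 0%N = 1.
Hypothesis f1 : f 1%N != 0.
Local Notation Rm := (quasi_riordan g f).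
Local Notation Jm := (Jmat g f).

Lemma R_sum_trunc n N (X : nat -> R) : (n < N)%N ->
  \sum_(l < N) Rm n l * X l = \sum_(l < n.+1) Rm n l * X l.
Proof.
move=> nN; rewrite (big_ord_widen N (fun l => Rm n l * X l) nN) [RHS]big_mkcond /=.
apply: eq_bigr => i _; case: ifP => // ilt.
rewrite /quasi_riordan; case: eqP => [i0|_]; first by rewrite i0 in ilt.
by rewrite ltnS in ilt; rewrite ilt mul0r.
Qed.

Lemma sum_R n (X : nat -> R) : \sum_(l < n.+1) Rm n l * X l =
  g n * X 0%N - f n.+1 * X 0%N + \sum_(l < n.+1) f (n.+1 - l)%N * X l.
Proof.
rewrite !big_ord_recl subn0 /= addrA subrK; congr (_ + _).
apply: eq_bigr => i _; rewrite /quasi_riordan /bump /= add1n ltn_ord subSS.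
by rewrite subnSK.
Qed.

Lemma q0 a : a 1%N = 0 -> ps_div a f 0 = 0.
Proof.
move=> a1; have := keyK a 0 f1; rewrite big_ord1 subn0 a1 => /eqP.
by rewrite mulf_eq0 (negPf f1) => /eqP.
Qed.

Lemma W0 : Wseq g f 0 = g 1%N.
Proof.
by rewrite /Wseq q0 ?add0r ?mul1r //= g0 mulr1 subrr subr0.
Qed.

Lemma Z0 : Zseq g f 0 = f 1%N.
Proof.
by rewrite /Zseq q0 ?add0r ?mul1r //= g0 mulr1 subrr.
Qed.

Lemma sumW n : \sum_(l < n.+1) f (n.+1 - l)%N * Wseq g f l
   = g n.+1 - g 1%N * g n + f n.+1 * g 1%N.
Proof.
rewrite /Wseq; under eq_bigr do rewrite mulrDr.
rewrite big_split /= keyK // big_ord_recl big1 /=.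
  by rewrite subn0 mul1r subr0 addr0.
by move=> i _; rewrite mul0r mulr0.
Qed.

Lemma sumZ n : \sum_(l < n.+1) f (n.+1 - l)%N * Zseq g f l
   = f n.+1 - f 1%N * g n + f n.+1 * f 1%N.
Proof.
rewrite /Zseq; under eq_bigr do rewrite mulrDr.
rewrite big_split /= keyK // big_ord_recl big1 /=.
  by rewrite subn0 mul1r addr0.
by move=> i _; rewrite mul0r mulr0.
Qed.

Lemma entry N n c : (n < N)%N -> Rm n.+1 c = \sum_(l < N) Rm n l * Jm l c.
Proof.
move=> nN; rewrite (R_sum_trunc (fun l => Jm l c)) // (sum_R _ (fun l => Jm l c)).
case: c => [|[|c]].
- rewrite /Jmat /= W0 sumW /quasi_riordan /=; ring.
- rewrite /Jmat /= Z0 sumZ /quasi_riordan /= subn1 /=; ring.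
- rewrite /Jmat /= !mulr0 subrr add0r.
  have -> : \sum_(l < n.+1) f (n.+1 - l)%N * (if c.+2 == l.+1 then 1 else 0)
     = \sum_(l < n.+1 | l == c.+1 :> nat) f (n.+1 - l)%N.
    rewrite [RHS]big_mkcond /=; apply: eq_bigr => i _.
    by rewrite eqSS eq_sym; case: eqP => _; rewrite ?mulr1 ?mulr0.
  rewrite (big_ord1_eq _ (fun l => f (n.+1 - l)%N)) /quasi_riordan /= !ltnS.
  by case: ifP => // cn; rewrite subSS subnSK.
Qed.
End Entry.

Section CB.
Variable R : numDomainType.

Lemma det_mul_expand k m (A : 'M[R]_(k,m)) (B : 'M[R]_(m,k)) :
  \det (A *m B) = \sum_(phi : {ffun 'I_k -> 'I_m})
     (\prod_i A i (phi i)) * \det (rowsub phi B).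
Proof.
rewrite /determinant.
under eq_bigr => s _ do under eq_bigr => i _ do rewrite mxE.
under eq_bigr => s _ do rewrite (bigA_distr_bigA (fun i j => A i j * B j (s i))) big_distrr.
rewrite exchange_big /=; apply: eq_bigr => phi _.
rewrite big_distrr; apply: eq_bigr => s _ /=.
rewrite big_split /= mulrCA; congr (_ * (_ * _)).
by apply: eq_bigr => i _; rewrite mxE.
Qed.

Lemma det_rowsub_perm k m (B : 'M[R]_(m,k)) (phi : 'I_k -> 'I_m) (p : 'S_k) :
  \det (rowsub (fun i => phi (p i)) B) = (-1) ^+ p * \det (rowsub phi B).
Proof.
have -> : rowsub (fun i => phi (p i)) B = row_perm p (rowsub phi B).
  by apply/matrixP => i j; rewrite !mxE.
by rewrite row_permE det_mulmx det_perm.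
Qed.

Lemma det_colsub_perm k m (A : 'M[R]_(k,m)) (phi : 'I_k -> 'I_m) (p : 'S_k) :
  \det (colsub (fun i => phi (p i)) A) = (-1) ^+ p * \det (colsub phi A).
Proof.
have -> : colsub (fun i => phi (p i)) A = col_perm p (colsub phi A).
  by apply/matrixP => i j; rewrite !mxE.
by rewrite col_permE det_mulmx det_perm odd_permV mulrC.
Qed.


Lemma detE n (M : 'M[R]_n) :
  \det M = \sum_(s : 'S_n) (-1) ^+ s * \prod_i M i (s i).
Proof. by []. Qed.

Lemma sign_sq (b : bool) : (-1) ^+ b * (-1) ^+ b = 1 :> R.
Proof. by rewrite -expr2 sqrr_sign. Qed.

Lemma sum_minors k m (A : 'M[R]_(k,m)) (B : 'M[R]_(m,k)) :
  \sum_(phi : {ffun 'I_k -> 'I_m}) \det (colsub phi A) * \det (rowsub phi B)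
  = (k`!)%:R * \det (A *m B).
Proof.
transitivity (\sum_(phi : {ffun 'I_k -> 'I_m}) \sum_(s : 'S_k)
    (-1) ^+ s * (\prod_i A i (phi (s i))) * \det (rowsub phi B)).
  apply: eq_bigr => phi _; rewrite [\det (colsub _ _)]detE big_distrl.
  apply: eq_bigr => s _ /=; congr (_ * _ * _).
  by apply: eq_bigr => i _; rewrite mxE.
rewrite exchange_big /=.
transitivity (\sum_(s : 'S_k) \det (A *m B)); last first.
  by rewrite sumr_const card_Sn mulr_natl.
apply: eq_bigr => s _; rewrite det_mul_expand.
pose h (psi : {ffun 'I_k -> 'I_m}) := [ffun i => psi ((s^-1)%g i)].
have hinj : injective h.
  move=> p1 p2 /ffunP e; apply/ffunP => i; have := e (s i).
  by rewrite !ffunE permK.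
rewrite (reindex_inj hinj); apply: eq_bigr => psi _.
have -> : \prod_i A i (h psi (s i)) = \prod_i A i (psi i).
  by apply: eq_bigr => i _; rewrite ffunE permK.
have -> : rowsub (h psi) B = rowsub (fun i => psi ((s^-1)%g i)) B.
  by apply/matrixP => i j; rewrite !mxE ffunE.
rewrite det_rowsub_perm odd_permV.
by rewrite mulrCA !mulrA sign_sq mul1r.
Qed.

Lemma CB_nonneg k m (A : 'M[R]_(k,m)) (B : 'M[R]_(m,k)) :
  (forall s : 'I_k -> 'I_m, (forall i j : 'I_k, (i < j)%N -> (s i < s j)%N) ->
     0 <= \det (colsub s A) * \det (rowsub s B)) ->
  0 <= \det (A *m B).
Proof.
move=> H.
have : 0 <= (k`!)%:R * \det (A *m B).
  rewrite -sum_minors; apply: sumr_ge0 => phi _.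
  case: (boolP (injectiveb phi)) => [/injectiveP phiinj | /injectivePn [x [y nxy exy]]];
    last first.
    rewrite [\det (rowsub _ _)](determinant_alternate nxy) ?mulr0 // => j.
    by rewrite !mxE exy.
  pose leT := fun x y : 'I_m => (x <= y)%N.
  pose t := [tuple phi i | i < k].
  have pe : perm_eq (sort leT t) t by rewrite perm_sort.
  case/tuple_permP: pe => p ep.
  pose psi := fun i => phi (p i).
  have Hs : forall i j : 'I_k, (i < j)%N -> (psi i < psi j)%N.
    move=> i j ij.
    have srt : sorted leT (sort leT t).
      apply: sort_sorted => a b; exact: leq_total.
    have nthE : forall l : 'I_k, nth (phi i) (sort leT t) l = psi l.
      by move=> l; rewrite ep /= (nth_map l) ?size_enum_ord // nth_ord_enum tnth_map tnth_ord_tuple.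
    have le : (psi i <= psi j)%N.
      rewrite -!nthE; apply: (sorted_leq_nth _ _ _ srt).
      - by move=> a b c; exact: leq_trans.
      - by move=> a; exact: leqnn.
      - by rewrite inE size_sort size_tuple.
      - by rewrite inE size_sort size_tuple.
      - exact: ltnW.
    rewrite ltn_neqAle le andbT; apply/negP => /eqP /val_inj /phiinj /perm_inj ije.
    by move: ij; rewrite ije ltnn.
  have := H psi Hs.
  rewrite /psi det_colsub_perm det_rowsub_perm.
  by rewrite mulrACA sign_sq mul1r.
by rewrite pmulr_rge0 // ltr0n fact_gt0.
Qed.

End CB.

Theorem theorem3p2 (R : realFieldType) (g f : nat -> R) :
  g 0%N = 1 -> f 0%N = 0 -> f 1%N != 0 ->
  totally_positive (Jmat g f) ->
  totally_positive (quasi_riordan g f).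
Proof.
move=> g0 f0 f1 TJ.
have main : forall N k (r c : 'I_k -> nat),
    (forall i j : 'I_k, (i < j)%N -> (r i < r j)%N) ->
    (forall i j : 'I_k, (i < j)%N -> (c i < c j)%N) ->
    (forall i, (r i < N)%N) ->
    0 <= \det (\matrix_(i < k, j < k) quasi_riordan g f (r i) (c j)).
  elim=> [|N IHN].
    move=> [|k] r c _ _ hr; first by rewrite det_mx00.
    by have := hr ord0.
  elim=> [|k IHk] r c hr hc hN; first by rewrite det_mx00.
  have rpos : forall i : 'I_k.+1, (0 < i)%N -> (0 < r i)%N.
    by move=> i ip; apply: (leq_ltn_trans _ (hr ord0 i ip)).
  have cpos : forall i : 'I_k.+1, (0 < i)%N -> (0 < c i)%N.
    by move=> i ip; apply: (leq_ltn_trans _ (hc ord0 i ip)).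
  case: (posnP (r ord0)) => [r0 | r0pos].
    rewrite (expand_det_row _ ord0).
    case: (posnP (c ord0)) => [c0|c0pos].
      rewrite big_ord_recl big1 ?addr0; last first.
        move=> j _; rewrite !mxE r0 /quasi_riordan.
        have cp := cpos (lift ord0 j) isT.
        by rewrite (negPf (lt0n_neq0 cp)) /= leqNgt cp mul0r.
      rewrite !mxE r0 c0 /quasi_riordan /= g0 mul1r /cofactor /= expr0 mul1r.
      have -> : row' ord0 (col' ord0 (\matrix_(i < k.+1, j < k.+1)
                   quasi_riordan g f (r i) (c j)))
         = \matrix_(i < k, j < k) quasi_riordan g f (r (lift ord0 i)) (c (lift ord0 j)).
        by apply/matrixP => i j; rewrite !mxE.
      apply: IHk.
      - by move=> i j ij; apply: hr; rewrite !lift0.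
      - by move=> i j ij; apply: hc; rewrite !lift0.
      - by move=> i; apply: hN.
    rewrite big1 // => j _; rewrite !mxE r0 /quasi_riordan.
    have cj : (0 < c j)%N.
      case: (posnP j) => [j0|jp]; last exact: cpos.
      by have -> : j = ord0 by apply: val_inj.
    by rewrite (negPf (lt0n_neq0 cj)) /= leqNgt cj mul0r.
  have rip : forall i, (0 < r i)%N.
    by move=> i; case: (posnP i) => [i0|ip]; [have -> : i = ord0 by apply: val_inj | exact: rpos].
  pose A := \matrix_(i < k.+1, l < N) quasi_riordan g f (r i).-1 l.
  pose B := \matrix_(l < N, j < k.+1) Jmat g f l (c j).
  have -> : \matrix_(i < k.+1, j < k.+1) quasi_riordan g f (r i) (c j) = A *m B.
    apply/matrixP => i j; rewrite !mxE.
    rewrite -(prednK (rip i)) (entry g0 f1 _ _ (N := N)); last first.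
      by rewrite -ltnS prednK // hN.
    by apply: eq_bigr => l _; rewrite !mxE.
  apply: CB_nonneg => s hs; apply: mulr_ge0.
    have -> : colsub s A = \matrix_(i < k.+1, j < k.+1) quasi_riordan g f (r i).-1 (s j).
      by apply/matrixP => i j; rewrite !mxE.
    apply: IHN.
    - move=> i j ij; have := hr i j ij.
      by rewrite -(prednK (rip i)) -(prednK (rip j)) ltnS.
    - exact: hs.
    - by move=> i; rewrite -ltnS prednK ?rip.
  have -> : rowsub s B = \matrix_(i < k.+1, j < k.+1) Jmat g f (s i) (c j).
    by apply/matrixP => i j; rewrite !mxE.
  exact: TJ.
move=> k r c hr hc; apply: (main (\sum_(i < k) r i).+1) => // i.
by rewrite ltnS (bigD1 i) //= leq_addr.
Qed.
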